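(* Let $n\in\mathbb N$ and $a_1,\dots,a_n>0$ with $a_i=a_{n+1-i}$ for all $1\le i\le n$ and $a_i\le a_{i+1}$ for $1\le i<\lceil n/2\rceil$. Setting $a_0=a_{n+1}=0$, $$\max_{1\le i\le n}\frac{a_{i-1}+a_{i+1}}{a_i}\ge 2\cos\Big(\frac{\pi}{n+1}\Big).$$ *)

(* Defs.v *)
From Stdlib Require Import Reals Lra Lia.
Open Scope R_scope.

(* max_1_to f n = max_{1 <= i <= n} f i  (meaningful for n >= 1;
   the base case f 1 is repeated harmlessly). *)
Fixpoint max_1_to (f : nat -> R) (n : nat) : R :=
  match n with
  | O => f 1%nat
  | S m => Rmax (max_1_to f m) (f (S m))
  end.

(* Main.v *)
Require Import Defs.
From Stdlib Require Import Reals Lra Lia.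
Open Scope R_scope.

Fixpoint sum1 (f : nat -> R) (m : nat) : R :=
  match m with O => 0 | S k => sum1 f k + f (S k) end.

Lemma sum1_le f g m : (forall i, (1 <= i <= m)%nat -> f i <= g i) -> sum1 f m <= sum1 g m.
Proof.
  induction m; intros H; simpl; [lra|].
  assert (sum1 f m <= sum1 g m) by (apply IHm; intros; apply H; lia).
  assert (f (S m) <= g (S m)) by (apply H; lia). lra.
Qed.

Lemma sum1_pos f m : (1 <= m)%nat -> (forall i, (1 <= i <= m)%nat -> 0 < f i) -> 0 < sum1 f m.
Proof.
  induction m; intros Hm H; simpl; [lia|].
  assert (0 < f (S m)) by (apply H; lia).
  destruct m. simpl. lra.
  assert (0 < sum1 f (S m)) by (apply IHm; [lia| intros; apply H; lia]). lra.
Qed.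

Lemma sum1_ext f g m : (forall i, (1 <= i <= m)%nat -> f i = g i) -> sum1 f m = sum1 g m.
Proof.
  induction m; intros H; simpl; [reflexivity|].
  rewrite IHm by (intros; apply H; lia). rewrite H by lia. reflexivity.
Qed.

Lemma sum1_scal c f m : sum1 (fun i => c * f i) m = c * sum1 f m.
Proof. induction m; simpl; [ring| rewrite IHm; ring]. Qed.

Lemma sum1_parts (a v : nat -> R) m :
  sum1 (fun i => v i * (a (i-1)%nat + a (i+1)%nat)) m =
  sum1 (fun i => a i * (v (i-1)%nat + v (i+1)%nat)) m
  + v 1%nat * a 0%nat - v (m+1)%nat * a m + v m * a (m+1)%nat - v 0%nat * a 1%nat.
Proof.
  induction m; simpl.
  - ring.
  - rewrite IHm. replace (m - 0)%nat with m by lia.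
    replace (m + 1)%nat with (S m) by lia.
    replace (S (m+1))%nat with (S (S m)) by lia. ring.
Qed.

Lemma max_ge f n i : (1 <= i <= n)%nat -> f i <= max_1_to f n.
Proof.
  induction n; intros H; [lia|]. simpl.
  destruct (Nat.eq_dec i (S n)) as [->|].
  - apply Rmax_r.
  - eapply Rle_trans; [apply IHn; lia| apply Rmax_l].
Qed.

Theorem lemma3p5 (n : nat) (a : nat -> R)
  (hn : (1 <= n)%nat)
  (hpos : forall i, (1 <= i <= n)%nat -> 0 < a i)
  (hsym : forall i, (1 <= i <= n)%nat -> a i = a (n + 1 - i)%nat)
  (hmono : forall i, (1 <= i)%nat -> (i < Nat.div (n + 1) 2)%nat -> a i <= a (S i))
  (h0 : a 0%nat = 0) (hn1 : a (n + 1)%nat = 0) :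
  max_1_to (fun i => (a (i - 1)%nat + a (i + 1)%nat) / a i) n
    >= 2 * cos (PI / INR (n + 1)).
Proof.
  set (M := max_1_to (fun i => (a (i - 1)%nat + a (i + 1)%nat) / a i) n).
  set (th := PI / INR (n + 1)).
  set (v := fun i : nat => sin (INR i * th)).
  assert (HN : 0 < INR (n+1)) by (apply lt_0_INR; lia).
  assert (v0 : v 0%nat = 0) by (unfold v; simpl; rewrite Rmult_0_l; apply sin_0).
  assert (vn : v (n+1)%nat = 0).
  { unfold v, th. replace (INR (n+1) * (PI / INR (n+1))) with PI by (field; lra).
    apply sin_PI. }
  assert (vpos : forall i, (1 <= i <= n)%nat -> 0 < v i).
  { intros i Hi. unfold v, th. apply sin_gt_0.
    - apply Rmult_lt_0_compat. apply lt_0_INR; lia.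
      apply Rdiv_lt_0_compat; [apply PI_RGT_0|lra].
    - assert (INR i < INR (n+1)) by (apply lt_INR; lia).
      replace (INR i * (PI / INR (n + 1))) with (PI * (INR i / INR (n+1))) by (field; lra).
      assert (INR i / INR (n+1) < 1).
      { apply (Rmult_lt_reg_r (INR (n+1))); [lra|].
        replace (INR i / INR (n+1) * INR (n+1)) with (INR i) by (field; lra). lra. }
      pose proof PI_RGT_0. nra. }
  assert (vrec : forall i, (1 <= i)%nat -> v (i-1)%nat + v (i+1)%nat = 2 * cos th * v i).
  { intros i Hi. unfold v. rewrite minus_INR by lia. rewrite plus_INR. simpl INR.
    replace ((INR i - 1) * th) with (INR i * th - th) by ring.
    replace ((INR i + 1) * th) with (INR i * th + th) by ring.
    rewrite sin_minus, sin_plus. ring. }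
  assert (Hb : forall i, (1 <= i <= n)%nat -> a (i-1)%nat + a (i+1)%nat <= M * a i).
  { intros i Hi. pose proof (hpos i Hi).
    pose proof (max_ge (fun i => (a (i - 1)%nat + a (i + 1)%nat) / a i) n i Hi) as Hm.
    fold M in Hm. simpl in Hm.
    apply (Rmult_le_compat_r (a i)) in Hm; [|lra].
    replace ((a (i - 1)%nat + a (i + 1)%nat) / a i * a i) with (a (i - 1)%nat + a (i + 1)%nat) in Hm by (field; lra).
    lra. }
  pose proof (sum1_parts a v n) as P.
  rewrite h0, hn1, v0, vn in P.
  assert (E : sum1 (fun i => a i * (v (i - 1)%nat + v (i + 1)%nat)) n
              = sum1 (fun i => 2 * cos th * (v i * a i)) n).
  { apply sum1_ext. intros i Hi. rewrite vrec by lia. ring. }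
  rewrite E, sum1_scal in P.
  assert (L : sum1 (fun i => v i * (a (i - 1)%nat + a (i + 1)%nat)) n
              <= sum1 (fun i => M * (v i * a i)) n).
  { apply sum1_le. intros i Hi. pose proof (Hb i Hi). pose proof (vpos i Hi).
    replace (M * (v i * a i)) with (v i * (M * a i)) by ring.
    apply Rmult_le_compat_l; lra. }
  rewrite sum1_scal in L.
  assert (S0 : 0 < sum1 (fun i => v i * a i) n).
  { apply sum1_pos; [lia|]. intros i Hi. pose proof (vpos i Hi). pose proof (hpos i Hi). nra. }
  apply Rle_ge. apply (Rmult_le_reg_r (sum1 (fun i => v i * a i) n)); [lra|]. lra.
Qed.
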